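(* Let $k$ be a field, and let $a,b,\alpha,\beta$ be integers with $1\leq\alpha<a$, $1\leq \beta<b$ and $a+\beta\leq b+\alpha$. Let $H(t)=\sum_i h_it^i$ be the Hilbert series of $B=k[x,y]/(x^a, y^b, x^\alpha y^\beta)$. Then: \begin{itemize} \item $H$ is unimodal; \item $h_{i}=h_{i-1}+1$ for every degree $i\geq 1$ up to the first degree where the maximum value of $h$ is attained; \item after it reaches its maximum, the sequence $h_i$ weakly decreases, with $h_{i}-h_{i+1}\in\{0,1,2\}$ for each such $i$; \item the maximum value is attained in degree $\min\{a,\beta+\alpha\}-1$ (and possibly in other degrees as well); \item the socle degree of $B$ (the largest $i$ with $h_i\neq 0$) is $b+\alpha-2$; \item $H$ is symmetric if and only if $a+\beta=b$; \item $B$ is \emph{not} almost centered if and only if either $b\geq a+\beta+2$, or ($a-\alpha\geq 2$, $\beta\geq 2$ and $b\leq a+\beta-2$). \end{itemize}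
   Context: For a graded Artinian algebra with Hilbert function $h_i=\dim_k B_i$, nonzero exactly for $p\leq i\leq q$ ($h_p,h_q\neq 0$), the Hilbert series is symmetric if $h_{p+i}=h_{q-i}$ for all $i$. With socle degree $D$, $B$ is almost centered if either $h_{i-1} \leq h_{D-i} \leq h_i$ for all $0 \leq i \leq \lfloor D/2 \rfloor$, or $h_{D-i+1} \leq h_{i} \leq h_{D-i}$ for all $0 \leq i \leq \lfloor D/2 \rfloor$ (with $h_j=0$ for $j<0$ or $j>D$). *)

(* Defs.v *)
From HB Require Import structures.
From mathcomp Require Import all_boot all_order all_algebra.
Set Implicit Arguments. Unset Strict Implicit. Unset Printing Implicit Defensive.
Import Order.TTheory GRing.Theory Num.Theory.

(* The degree-i part k[x,y]_i is modelled
   as the k-vector space 'rV[k]_(i.+1): the j-th standard basis row vector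
   delta_mx 0 j stands for the monomial x^j y^(i-j). *)

Definition in_ideal (a b al be u v : nat) : bool :=
  [|| a <= u, b <= v | (al <= u) && (be <= v)].

Definition ideal_deg (k : fieldType) (a b al be i : nat) : {vspace 'rV[k]_(i.+1)} :=
  (<< [seq (@delta_mx k 1 i.+1 ord0 j : 'rV[k]_(i.+1)) | j : 'I_(i.+1) <- enum 'I_(i.+1) & in_ideal a b al be (nat_of_ord j) (i - j)] >>)%VS.

Definition hilb (k : fieldType) (a b al be : nat) (i : nat) : nat :=
  (\dim (fullv : {vspace 'rV[k]_(i.+1)}) - \dim (ideal_deg k a b al be i))%N.

Definition unimodal (h : nat -> nat) : Prop :=
  exists m, (forall i j, i <= j -> j <= m -> h i <= h j) /\
            (forall i j, m <= i -> i <= j -> h j <= h i).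

Definition is_max_deg (h : nat -> nat) (p : nat) : Prop := forall i, h i <= h p.

Definition first_max_deg (h : nat -> nat) (p : nat) : Prop :=
  is_max_deg h p /\ forall j, j < p -> ~ is_max_deg h j.

Definition socle_deg (h : nat -> nat) (D : nat) : Prop :=
  h D <> 0 /\ forall i, D < i -> h i = 0.

Definition symmetric_hs (h : nat -> nat) : Prop :=
  exists p q, p <= q /\ (forall i, h i <> 0 <-> p <= i <= q) /\
    forall i, i <= q - p -> h (p + i) = h (q - i).

Definition hext (h : nat -> nat) (D : nat) (j : int) : nat :=
  if ((0 <= j)%R && (j <= D%:Z)%R) then h `|j|%N else 0.

Definition almost_centered (h : nat -> nat) (D : nat) : Prop :=
  (forall i : nat, i <= D./2 ->
     hext h D (i%:Z - 1)%R <= hext h D (D%:Z - i%:Z)%R <= hext h D i%:Z)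
  \/
  (forall i : nat, i <= D./2 ->
     hext h D (D%:Z - i%:Z + 1)%R <= hext h D i%:Z <= hext h D (D%:Z - i%:Z)%R).

(* Main.v *)
From HB Require Import structures.
From mathcomp Require Import all_boot all_order all_algebra zify.
Require Import Defs.
From Stdlib Require Import Classical FunctionalExtensionality.
Set Implicit Arguments. Unset Strict Implicit. Unset Printing Implicit Defensive.
Import Order.TTheory GRing.Theory Num.Theory.

Lemma dim_filter_delta (k : fieldType) n (P : pred 'I_n) :
  \dim (<< [seq (@delta_mx k 1 n ord0 j : 'rV[k]_n) | j : 'I_n <- enum 'I_n & P j] >>)%VS
  = count P (enum 'I_n).
Proof.
set f := fun j : 'I_n => (@delta_mx k 1 n ord0 j : 'rV[k]_n).
have bX : basis_of fullv [seq f j | j <- enum 'I_n].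
  rewrite basisEdim size_map size_enum_ord dimvf.
  have -> : dim 'rV[k]_n = n. by rewrite (@dim_matrix k 1 n) mul1r.
  rewrite leqnn andbT.
  apply/subvP => v _; rewrite [v]row_sum_delta.
  apply: memv_suml => j _; apply: memvZ; apply: memv_span.
  by apply: map_f; rewrite mem_enum.
have fX := basis_free bX.
have fY : free [seq f j | j <- enum 'I_n & P j].
  have := fX; rewrite -(perm_free (perm_map f (permEl (perm_filterC P (enum 'I_n))))).
  by rewrite map_cat => /catl_free.
by rewrite (eqnP fY) size_map size_filter.
Qed.

Lemma hilb_count (k : fieldType) a b al be i :
  hilb k a b al be i = count (fun u => ~~ in_ideal a b al be u (i - u)) (iota 0 i.+1).
Proof.
rewrite /hilb /ideal_deg dim_filter_delta dimvf (@dim_matrix k 1 i.+1) mul1r.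
have -> : count (fun j : 'I_i.+1 => in_ideal a b al be j (i - j)) (enum 'I_i.+1)
  = count (fun u => in_ideal a b al be u (i - u)) (iota 0 i.+1).
  by rewrite -val_enum_ord count_map.
have := count_predC (fun u => in_ideal a b al be u (i - u)) (iota 0 i.+1).
rewrite size_iota => E; rewrite -{1}E addKn.
by apply: eq_count.
Qed.

Lemma count_interval lo hi n :
  count (fun u => lo <= u < hi) (iota 0 n) = minn hi n - lo.
Proof.
elim: n => [|n IH]; first by rewrite /= minn0.
rewrite -addn1 iotaD count_cat IH /= add0n addn0.
case: (leqP lo n) => /= H1; case: (ltnP n hi) => /= H2; lia.
Qed.

Lemma count_diff (T : Type) (A B : pred T) s :
  (forall x, B x -> A x) ->
  count (fun x => A x && ~~ B x) s = count A s - count B s.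
Proof.
move=> BA; suff: count (fun x => A x && ~~ B x) s + count B s = count A s by lia.
elim: s => [|x s IH] //=.
case Bx: (B x); first by rewrite (BA _ Bx) /=; lia.
case: (A x) => /=; lia.
Qed.

Definition F (a b al be i : nat) : nat :=
  (minn a i.+1 - (i.+1 - b)) - (minn (minn a (i.+1 - be)) i.+1 - maxn al (i.+1 - b)).

Lemma hilbE (k : fieldType) a b al be i : 1 <= al ->
  hilb k a b al be i = F a b al be i.
Proof.
move=> Hal.
rewrite hilb_count /F.
rewrite -(count_interval (i.+1 - b) a) -(count_interval (maxn al (i.+1 - b)) (minn a (i.+1 - be))).
rewrite -count_diff; last first.
  move=> u /= /andP[H1 H2]; apply/andP; split; lia.
apply: eq_in_count => u; rewrite mem_iota => /andP[_ Hu].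
rewrite /in_ideal.
case: (leqP a u); case: (leqP b (i - u)); case: (leqP al u); case: (leqP be (i - u));
case: (leqP (i.+1 - b) u); case: (ltnP u a); case: (leqP (maxn al (i.+1 - b)) u);
case: (ltnP u (minn a (i.+1 - be))) => //=; lia.
Qed.

Ltac has_op t := idtac; match t with
  | context [minn _ _] => idtac | context [maxn _ _] => idtac | context [subn _ _] => idtac end.

Ltac elim_op := match goal with
 | |- context [subn ?x ?y] => assert_fails (has_op x); assert_fails (has_op y);
     let d := fresh "d" in let E := fresh "E" in
     have E : (x <= y /\ 0 = x - y) \/ (y < x /\ (x - y) + y = x); [lia|];
     set d := subn x y in E |- *; clearbody d;
     case: E => [[? ?]|[? ?]]; subst; try (exfalso; lia)
 | |- context [minn ?x ?y] => assert_fails (has_op x); assert_fails (has_op y);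
     let d := fresh "d" in let E := fresh "E" in
     have E : (x <= y /\ minn x y = x) \/ (y < x /\ minn x y = y); [lia|];
     set d := minn x y in E |- *; clearbody d;
     case: E => [[? ?]|[? ?]]; subst; try (exfalso; lia)
 | |- context [maxn ?x ?y] => assert_fails (has_op x); assert_fails (has_op y);
     let d := fresh "d" in let E := fresh "E" in
     have E : (x <= y /\ maxn x y = y) \/ (y < x /\ maxn x y = x); [lia|];
     set d := maxn x y in E |- *; clearbody d;
     case: E => [[? ?]|[? ?]]; subst; try (exfalso; lia)
 end.
Ltac crunch := repeat elim_op; lia.

Definition G (a b al be i : nat) : nat :=
  (i.+1 + (i.+1 - (a + be)) + (i.+1 - (b + al))) - ((i.+1 - a) + (i.+1 - b) + (i.+1 - (al + be))).

Lemma FG a b al be i : 1 <= al -> al < a -> 1 <= be -> be < b -> a + be <= b + al -> F a b al be i = G a b al be i.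
Proof. rewrite /F /G. do 5 intro. crunch. Qed.

Section Arith.
Variables a b al be : nat.
Hypotheses (H1 : 1 <= al) (H2 : al < a) (H3 : 1 <= be) (H4 : be < b) (H5 : a + be <= b + al).
Local Notation g := (G a b al be).

Lemma G_lin i : i < minn a (minn b (al + be)) -> g i = i.+1.
Proof using H1 H2 H3 H4 H5. rewrite /G. crunch. Qed.
Lemma G_dec i : minn a (minn b (al + be)) <= i.+1 -> g i.+1 <= g i /\ g i - g i.+1 <= 2.
Proof using H1 H2 H3 H4 H5. rewrite /G. crunch. Qed.
Lemma G_pq : g (minn a (be + al) - 1) = g (minn a (minn b (al + be)) - 1).
Proof using H1 H2 H3 H4 H5. rewrite /G. crunch. Qed.
Lemma G_socle1 : g (b + al - 2) <> 0.
Proof using H1 H2 H3 H4 H5. rewrite /G. crunch. Qed.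
Lemma G_socle2 i : b + al - 2 < i -> g i = 0.
Proof using H1 H2 H3 H4 H5. rewrite /G. crunch. Qed.
Lemma G_pos i : i <= b + al - 2 -> g i <> 0.
Proof using H1 H2 H3 H4 H5. rewrite /G. crunch. Qed.
Lemma G_sym i : a + be = b -> i <= b + al - 2 -> g i = g (b + al - 2 - i).
Proof using H1 H2 H3 H4 H5. move=> E; subst b. rewrite /G. crunch. Qed.
Lemma G_asym : a + be <> b ->
  minn (minn a (minn b (al + be)) - 1) (b + al - (a + be)) <= b + al - 2 /\
  g (minn (minn a (minn b (al + be)) - 1) (b + al - (a + be))) <>
  g (b + al - 2 - minn (minn a (minn b (al + be)) - 1) (b + al - (a + be))).
Proof using H1 H2 H3 H4 H5. rewrite /G. crunch. Qed.


Lemma c1a i : b = (a + be).+1 -> i + i <= b + al - 2 -> g (b + al - 2 - i) <= g i.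
Proof using H1 H2 H3 H4 H5. move=> E; subst b; rewrite /G. crunch. Qed.
Lemma c1b i : b = (a + be).+1 -> i.+1 + i.+1 <= b + al - 2 -> g i <= g (b + al - 2 - i.+1).
Proof using H1 H2 H3 H4 H5. move=> E; subst b; rewrite /G. crunch. Qed.
Lemma c2a i : b <= a + be -> (a = al.+1 \/ be = 1 \/ a + be <= b.+1) ->
   i + i <= b + al - 2 -> g i <= g (b + al - 2 - i).
Proof using H1 H2 H3 H4 H5. move=> Hb [E|[E|E]]; [subst a|subst be|]; rewrite /G; crunch. Qed.
Lemma c2b i : b <= a + be -> (a = al.+1 \/ be = 1 \/ a + be <= b.+1) ->
   i.+1 + i.+1 <= b + al - 2 -> g (b + al - 2 - i) <= g i.+1.
Proof using H1 H2 H3 H4 H5. move=> Hb [E|[E|E]]; [subst a|subst be|]; rewrite /G; crunch. Qed.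
Lemma wA1 : a + be + 2 <= b -> 1 <= minn a (al + be) /\ minn a (al + be) + minn a (al + be) <= b + al - 2 /\
   g (b + al - 2 - minn a (al + be)) < g (minn a (al + be) - 1).
Proof using H1 H2 H3 H4 H5. move=> Hb; rewrite /G. crunch. Qed.
Lemma wA2 : a + be + 2 <= b -> (minn a (al + be) - 1) + (minn a (al + be) - 1) <= b + al - 2 /\
   g (b + al - 2 - (minn a (al + be) - 1)) < g (minn a (al + be) - 1).
Proof using H1 H2 H3 H4 H5. move=> Hb; rewrite /G. crunch. Qed.
Lemma wB1 : al + 2 <= a -> 2 <= be -> b + 2 <= a + be ->
   (b + al - (a + be)) + (b + al - (a + be)) <= b + al - 2 /\
   g (b + al - (a + be)) < g (b + al - 2 - (b + al - (a + be))).
Proof using H1 H2 H3 H4 H5. move=> ? ? ?; rewrite /G. crunch. Qed.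
Lemma wB2 : al + 2 <= a -> 2 <= be -> b + 2 <= a + be ->
   1 <= minn al (b - be) /\ minn al (b - be) + minn al (b - be) <= b + al - 2 /\
   g (minn al (b - be)) < g (b + al - 2 - minn al (b - be) + 1).
Proof using H1 H2 H3 H4 H5. move=> ? ? ?; rewrite /G. crunch. Qed.
End Arith.

Lemma hext_in h D i : i <= D -> hext h D (Posz i) = h i.
Proof. move=> Hi; rewrite /hext; have -> : ((0 <= (Posz i))%R && ((Posz i) <= (Posz D))%R) = true by lia. by []. Qed.
Lemma hext_out h D i : D < i -> hext h D (Posz i) = 0.
Proof. move=> Hi; rewrite /hext; have -> : ((0 <= (Posz i))%R && ((Posz i) <= (Posz D))%R) = false by lia. by []. Qed.
Lemma hext_m1 h D : hext h D (-1)%R = 0.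
Proof. by rewrite /hext. Qed.
Lemma Zsub1 i : ((Posz i.+1) - 1)%R = (Posz i).
Proof. lia. Qed.
Lemma Zsub i D : i <= D -> ((Posz D) - (Posz i))%R = (Posz (D - i)).
Proof. lia. Qed.
Lemma Zsubadd i D : i <= D -> ((Posz D) - (Posz i) + 1)%R = (Posz (D - i + 1)).
Proof. lia. Qed.

Lemma hext_0m1 h D : hext h D ((Posz 0) - 1)%R = 0.
Proof. by rewrite /hext. Qed.

Theorem lemma3p4 (k : fieldType) (a b al be : nat) :
  1 <= al -> al < a -> 1 <= be -> be < b -> a + be <= b + al ->
  let h := hilb k a b al be in
  unimodal h /\
  (forall p, first_max_deg h p -> forall i, 1 <= i -> i <= p -> h i = (h i.-1).+1) /\
  (forall p, first_max_deg h p -> forall i, p <= i ->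
      h i.+1 <= h i /\ h i - h i.+1 <= 2) /\
  is_max_deg h (minn a (be + al) - 1) /\
  socle_deg h (b + al - 2) /\
  (symmetric_hs h <-> a + be = b) /\
  (~ almost_centered h (b + al - 2) <->
     (a + be + 2 <= b \/ [/\ al + 2 <= a, 2 <= be & b + 2 <= a + be])).
Proof.
move=> H1 H2 H3 H4 H5 h.
have hE : h = G a b al be.
  apply: functional_extensionality => i; rewrite /h hilbE // FG //.
rewrite hE; clear hE h.
set g := G a b al be.
have Glin : forall i, i <= minn a (minn b (al + be)) - 1 -> g i = i.+1.
  move=> i Hi; apply: G_lin => //; lia.
have Gdec : forall i, minn a (minn b (al + be)) - 1 <= i -> g i.+1 <= g i /\ g i - g i.+1 <= 2.
  move=> i Hi; apply: G_dec => //; lia.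
set q := minn a (minn b (al + be)) - 1 in Glin Gdec *.
have Gdecs : forall i j, q <= i -> i <= j -> g j <= g i.
  move=> i j Hi; elim: j => [|j IH] Hj; first by have -> : i = 0 by lia.
  case: (ltnP i j.+1) => Hij; last by have -> : i = j.+1 by lia.
  have := Gdec j; have := IH; lia.
have Gmax : forall i, g i <= g q.
  move=> i; case: (leqP i q) => Hi; first by rewrite !Glin //; lia.
  by apply: Gdecs => //; lia.
have fm : forall p, first_max_deg g p -> p = q.
  move=> p [Hp Hfirst].
  case: (ltngtP p q) => // Hpq.
  - have := Hp q; rewrite !Glin //; lia.
  - by case: (Hfirst q Hpq).
split.
  exists q; split.
  - move=> i j Hij Hjq; rewrite !Glin //; lia.
  - move=> i j Hqi Hij; exact: Gdecs.
split.
  move=> p /fm -> i Hi1 Hiq; rewrite !Glin //; lia.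
split.
  move=> p /fm -> i Hi; exact: Gdec.
split.
  move=> i; rewrite /g G_pq //; exact: Gmax.
split.
  split; [exact: G_socle1 | move=> i; exact: G_socle2].
split.
  split.
  - case=> P [Q [HPQ [Hnz Hsym]]].
    have P0 : P = 0.
      have := (Hnz 0).1 (G_pos H1 H2 H3 H4 H5 (leq0n _)); lia.
    have QD : Q = b + al - 2.
      have := (Hnz (b + al - 2)).1 (G_socle1 H1 H2 H3 H4 H5).
      have := (Hnz Q).2 (ltac:(lia)).
      case: (leqP Q (b + al - 2)) => HQ; first lia.
      by rewrite /g (G_socle2 H1 H2 H3 H4 H5 HQ).
    subst P Q.
    case: (eqVneq (a + be) b) => // /eqP Hne.
    have [Hw Hneq] := G_asym H1 H2 H3 H4 H5 Hne.
    rewrite subn0 in Hsym.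
    by case: Hneq; have := Hsym _ Hw; rewrite add0n.
  - move=> E; exists 0, (b + al - 2); split; first lia.
    split.
    + move=> i; split.
      * move=> Hi; case: (leqP i (b + al - 2)) => Hi2; first lia.
        by case: Hi; rewrite /g (G_socle2 H1 H2 H3 H4 H5 Hi2).
      * move=> Hi; apply: G_pos => //; lia.
    + move=> i Hi; rewrite add0n; apply: G_sym => //; lia.
have half : forall i, (i <= (b + al - 2)./2) = (i + i <= b + al - 2).
  by move=> i; rewrite geq_half_double -addnn.
have ACof : ~ (a + be + 2 <= b \/ [/\ al + 2 <= a, 2 <= be & b + 2 <= a + be]) ->
    almost_centered g (b + al - 2).
  move=> nR.
  have nA : ~ (a + be + 2 <= b) by move=> X; apply: nR; left.
  have nB : ~ [/\ al + 2 <= a, 2 <= be & b + 2 <= a + be] by move=> X; apply: nR; right.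
  case: (leqP b (a + be)) => Hb.
  - right => i; rewrite half => Hi.
    rewrite Zsubadd; last lia.
    rewrite (Zsub (i:=i)); last lia.
    rewrite (hext_in _ (i:=i)); last lia.
    rewrite (hext_in _ (i:=b + al - 2 - i)); last lia.
    have X : a = al.+1 \/ be = 1 \/ a + be <= b.+1.
      case: (leqP (al + 2) a) => Ha; last by left; lia.
      case: (leqP 2 be) => Hbe; last by right; left; lia.
      case: (leqP (b + 2) (a + be)) => Hab; last by right; right; lia.
      by case: nB.
    apply/andP; split; last exact: c2a.
    case: i Hi => [|i] Hi.
      by rewrite hext_out //; lia.
    rewrite hext_in; last lia.
    have -> : b + al - 2 - i.+1 + 1 = b + al - 2 - i by lia.
    exact: c2b.
  - have Eb : b = (a + be).+1 by lia.
    left => i; rewrite half => Hi.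
    rewrite (Zsub (i:=i)); last lia.
    rewrite (hext_in _ (i:=i)); last lia.
    rewrite (hext_in _ (i:=b + al - 2 - i)); last lia.
    apply/andP; split; last exact: c1a.
    case: i Hi => [|i] Hi; first by rewrite hext_0m1.
    rewrite Zsub1 hext_in; last lia.
    exact: c1b.
have notAC : (a + be + 2 <= b \/ [/\ al + 2 <= a, 2 <= be & b + 2 <= a + be]) ->
    ~ almost_centered g (b + al - 2).
  case=> [HA|[Ha Hbe Hab]] [C|C].
  - have [W1 [W2 W3]] := wA1 H1 H2 H3 H4 H5 HA.
    set w := minn a (al + be) in W1 W2 W3.
    have /andP[+ _] := C w (ltac:(by rewrite half)).
    have -> : (Posz w - 1)%R = Posz (w - 1) by lia.
    rewrite (Zsub (i:=w)); last lia.
    rewrite !hext_in; try rewrite /g; lia.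
  - have [W2 W3] := wA2 H1 H2 H3 H4 H5 HA.
    set w := minn a (al + be) - 1 in W2 W3.
    have /andP[_] := C w (ltac:(by rewrite half)).
    rewrite (Zsub (i:=w)); last lia.
    rewrite !hext_in; try rewrite /g; lia.
  - have [W2 W3] := wB1 H1 H2 H3 H4 H5 Ha Hbe Hab.
    set w := b + al - (a + be) in W2 W3.
    have /andP[_] := C w (ltac:(by rewrite half)).
    rewrite (Zsub (i:=w)); last lia.
    rewrite !hext_in; try rewrite /g; lia.
  - have [W1 [W2 W3]] := wB2 H1 H2 H3 H4 H5 Ha Hbe Hab.
    set w := minn al (b - be) in W1 W2 W3.
    have /andP[+ _] := C w (ltac:(by rewrite half)).
    rewrite Zsubadd; last lia.
    rewrite !hext_in; try rewrite /g; lia.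
split.
- move=> nAC; apply: NNPP => nR; exact: nAC (ACof nR).
- exact: notAC.
Qed.
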